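(* Let $X$ be a convex metric space over a Boolean ring $B$ which is a convex closure of a subset $H\subseteq X$ with $0\in H$, and let $f:X\to Y$ be a contractive map into a metric space $Y$ over $B$ with $f(0)=0'$. Then $f^{-1}(0')$ equals the set of all convex combinations (in $X$) of elements of $\{0\}\cup\{\overline{d'(0',f(x))}\,x : x\in H\}$, where for $a\in B$ and $x\in X$, $ax$ denotes the convex combination of $x,0$ with coefficients $a,\bar a$.
   Context: $B$ is a Boolean ring ($a\vee b=a+b+ab$, $a\le b\iff ab=a$, $\bar a=1+a$; $a_1\oplus\cdots\oplus a_n$ denotes a sum of pairwise disjoint elements). A Boolean metric space over $B$: set $X$ with $d:X\times X\to B$, $d(x,y)=0\iff x=y$, symmetric, $d(x,z)\le d(x,y)\vee d(y,z)$. For $x_1,\dots,x_n\in X$, $a_i\in B$ with $a_1\oplus\cdots\oplus a_n=1$, $x$ is a convex combination of the $x_i$ with coefficients $a_i$ if $a_id(x,x_i)=0$ for all $i$; $X$ is convex if all such combinations exist; $X$ is a convex closure of $H\subseteq X$ if $X$ is convex and every element of $X$ is a convex combination of elements of $H$. $d'$ is the metric of $Y$. A map is contractive if $d'(f(x),f(y))\le d(x,y)$. *)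

(* Defs.v *)
From HB Require Import structures.
From mathcomp Require Import all_boot all_order all_algebra.
Set Implicit Arguments. Unset Strict Implicit. Unset Printing Implicit Defensive.
Import GRing.Theory.
Local Open Scope ring_scope.

Definition boolean_ring (B : comPzRingType) : Prop := forall a : B, a * a = a.

Definition bjoin {B : comPzRingType} (a b : B) : B := a + b + a * b.
Definition ble {B : comPzRingType} (a b : B) : Prop := a * b = a.
Definition bcompl {B : comPzRingType} (a : B) : B := 1 + a.

Definition boolean_metric (B : comPzRingType) (X : Type) (d : X -> X -> B) : Prop :=
  [/\ (forall x y, d x y = 0 <-> x = y),
      (forall x y, d x y = d y x) &
      (forall x y z, ble (d x z) (bjoin (d x y) (d y z)))].

Definition disjoint_sum_one (B : comPzRingType) (n : nat) (a : 'I_n -> B) : Prop :=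
  (forall i j : 'I_n, i != j -> a i * a j = 0) /\ \sum_(i < n) a i = 1.

Definition convex_comb (B : comPzRingType) (X : Type) (d : X -> X -> B)
  (n : nat) (xs : 'I_n -> X) (a : 'I_n -> B) (x : X) : Prop :=
  forall i : 'I_n, a i * d x (xs i) = 0.

Definition convex_space (B : comPzRingType) (X : Type) (d : X -> X -> B) : Prop :=
  forall (n : nat) (xs : 'I_n -> X) (a : 'I_n -> B),
    disjoint_sum_one a -> exists x, convex_comb d xs a x.

Definition convex_comb_of (B : comPzRingType) (X : Type) (d : X -> X -> B)
  (S : X -> Prop) (x : X) : Prop :=
  exists (n : nat) (xs : 'I_n -> X) (a : 'I_n -> B),
    disjoint_sum_one a /\ (forall i, S (xs i)) /\ convex_comb d xs a x.

Definition convex_closure (B : comPzRingType) (X : Type) (d : X -> X -> B)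
  (H : X -> Prop) : Prop :=
  convex_space d /\ forall x, convex_comb_of d H x.

(* z = a x, i.e. z is the convex combination of x, 0 with coefficients a, ~a. *)
Definition scal_comb (B : comPzRingType) (X : Type) (d : X -> X -> B)
  (x0 : X) (a : B) (x z : X) : Prop :=
  convex_comb d (fun i : 'I_2 => if val i == 0%N then x else x0)
                (fun i : 'I_2 => if val i == 0%N then a else bcompl a) z.

Definition contractive (B : comPzRingType) (X Y : Type)
  (d : X -> X -> B) (d' : Y -> Y -> B) (f : X -> Y) : Prop :=
  forall x y, ble (d' (f x) (f y)) (d x y).

(* Main.v *)
Require Import Defs.
From HB Require Import structures.
From mathcomp Require Import all_boot all_order all_algebra.
From Stdlib Require Import ClassicalEpsilon.
Import GRing.Theory.
Local Open Scope ring_scope.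

Lemma br_add2 {B : comPzRingType} : boolean_ring B -> forall a : B, a + a = 0.
Proof.
move=> hB a. have h := hB (a + a).
rewrite mulrDl !mulrDr !hB in h.
apply: (addrI (a + a)). by rewrite addr0.
Qed.

Lemma ble_mul0 {B : comPzRingType} {e p q r : B} :
  ble p (bjoin q r) -> e * q = 0 -> e * r = 0 -> e * p = 0.
Proof.
rewrite /ble /bjoin => hp hq hr.
rewrite -hp !mulrDr (mulrCA e p q) hq (mulrCA e p r) hr (mulrCA e p) (mulrA e q r) hq.
by rewrite mul0r !mulr0 !addr0.
Qed.

Lemma ble_compl {B : comPzRingType} {c x : B} : c * x = 0 -> ble x (bcompl c).
Proof. by move=> h; rewrite /ble /bcompl mulrDr mulr1 mulrC h addr0. Qed.

Lemma ble_trans {B : comPzRingType} {p q r : B} : ble p q -> ble q r -> ble p r.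
Proof. rewrite /ble => h1 h2. by rewrite -h1 -mulrA h2. Qed.

Lemma ble_join {B : comPzRingType} {q r s : B} :
  ble q s -> ble r s -> ble (bjoin q r) s.
Proof. by rewrite /ble /bjoin => h1 h2; rewrite !mulrDl -mulrA h2 h1. Qed.

Lemma ble_both0 {B : comPzRingType} : boolean_ring B ->
  forall p c : B, ble p c -> ble p (bcompl c) -> p = 0.
Proof.
move=> hB p c h1; rewrite /ble /bcompl mulrDr mulr1 h1 => h2.
by rewrite br_add2 in h2.
Qed.

Lemma bcc {B : comPzRingType} : boolean_ring B -> forall c : B, bcompl (bcompl c) = c.
Proof. by move=> hB c; rewrite /bcompl addrA br_add2 // add0r. Qed.

Theorem mainTheorem20 (B : comPzRingType) (X Y : Type)
  (d : X -> X -> B) (d' : Y -> Y -> B) (x0 : X) (y0 : Y)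
  (H : X -> Prop) (f : X -> Y) :
  boolean_ring B ->
  boolean_metric d -> boolean_metric d' ->
  convex_closure d H -> H x0 ->
  contractive d d' f -> f x0 = y0 ->
  forall z : X,
    f z = y0 <->
    convex_comb_of d
      (fun w => w = x0 \/
         exists x, H x /\ scal_comb d x0 (bcompl (d' y0 (f x))) x w) z.
Proof.
move=> hB [d0 dsym dtri] [d0' dsym' dtri'] [conv hull] Hx0 contr fx0 z.
have two_ok : forall c : B,
    disjoint_sum_one (fun i : 'I_2 => if val i == 0%N then c else bcompl c).
  move=> c; split.
  - move=> [[|[|i]] hi] [[|[|j]] hj] //= _;
      rewrite /bcompl ?mulrDl ?mulrDr ?mul1r ?mulr1 ?hB ?br_add2 //.
  - by rewrite big_ord_recr big_ord_recr big_ord0 /= add0r /bcompl addrCA br_add2 // addr0.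
have sc : forall c x w, scal_comb d x0 c x w -> c * d w x = 0 /\ bcompl c * d w x0 = 0.
  by move=> c x w h; split; [exact: (h ord0) | exact: (h ord_max)].
split.
- move=> fz.
  have [n [xs [a [ha [hH hc]]]]] := hull z.
  have ex : forall i, exists w, scal_comb d x0 (bcompl (d' y0 (f (xs i)))) (xs i) w.
    by move=> i; rewrite /scal_comb; apply: conv; apply: two_ok.
  pose w i := proj1_sig (constructive_indefinite_description _ (ex i)).
  have hw i : scal_comb d x0 (bcompl (d' y0 (f (xs i)))) (xs i) (w i)
    := proj2_sig (constructive_indefinite_description _ (ex i)).
  exists n, w, a; split; first done; split.
  + by move=> i; right; exists (xs i); split; [exact: hH | exact: hw].
  + move=> i.
    have [h1 h2] := sc _ _ _ (hw i).
    have hd' : a i * d' y0 (f (xs i)) = 0.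
      have := contr z (xs i); rewrite /ble fz => <-.
      by rewrite mulrCA hc mulr0.
    have hq : a i * d (xs i) (w i) = 0.
      have := ble_compl h1; rewrite bcc // dsym /ble => <-.
      by rewrite mulrCA hd' mulr0.
    exact: ble_mul0 (dtri z (xs i) (w i)) (hc i) hq.
- move=> [n [xs [a [[hdis hsum] [hS hc]]]]].
  have fw : forall i, f (xs i) = y0.
    move=> i; case: (hS i) => [-> //| [x [_ hsc]]].
    have [h1 h2] := sc _ _ _ hsc.
    apply/d0'.
    apply: (ble_both0 hB _ (bcompl (d' y0 (f x)))).
    + apply: (ble_trans (q := d (xs i) x0)); first by rewrite -fx0; exact: contr.
      by have := ble_compl h2; rewrite bcc.
    + apply: ble_trans (dtri' (f (xs i)) (f x) y0) _.
      apply: ble_join.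
      * apply: ble_trans (contr _ _) _; exact: ble_compl h1.
      * by rewrite bcc // dsym' /ble hB.
  apply/d0'.
  rewrite -[d' _ _]mulr1 -hsum mulr_sumr big1 // => i _.
  rewrite mulrC; apply: (ble_mul0 (dtri' (f z) (f (xs i)) y0)).
  + by rewrite -(contr z (xs i)) mulrCA hc mulr0.
  + by rewrite fw (proj2 (d0' _ _) erefl) mulr0.
Qed.
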